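(* Let $\{T_n\}_{n\in\mathbb{Z}}$ and $\{S_n\}_{n\in\mathbb{Z}}$ be discrete linear evolution processes in a Banach space $X$ which admit nonuniform exponential dichotomies with projections $\{Q^{\mathcal{T}}_n\}$ and $\{Q^{\mathcal{S}}_n\}$, exponents $\alpha_{\mathcal{T}}$ and $\alpha_{\mathcal{S}}$ respectively, and the same bound $K(n)\le De^{\nu|n|}$. If $\nu<\min\{\alpha_{\mathcal{T}},\alpha_{\mathcal{S}}\}$ and $$\sup_{n\in\mathbb{Z}}\{K(n+1)\|T_n-S_n\|_{\mathcal{L}(X)}\}\le\epsilon,$$ then $$\sup_{n\in\mathbb{Z}}\{K(n)^{-1}\|Q^{\mathcal{T}}_n-Q^{\mathcal{S}}_n\|_{\mathcal{L}(X)}\}\le\frac{e^{-\alpha_{\mathcal{S}}}+e^{-\alpha_{\mathcal{T}}}}{1-e^{-(\alpha_{\mathcal{S}}+\alpha_{\mathcal{T}})}}\,\epsilon.$$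
   Context: A discrete (linear) evolution process in a Banach space $X$ is a family $\{S_{n,m}: n,m\in\mathbb{Z},\ n\ge m\}\subset\mathcal{L}(X)$ with $S_{n,n}=Id_X$ and $S_{n,m}S_{m,k}=S_{n,k}$ for $n\ge m\ge k$; equivalently it is given by one-step operators $S_n:=S_{n+1,n}$ via $S_{n,m}=S_{n-1}\cdots S_m$ ($n>m$). It admits a nonuniform exponential dichotomy if there is a family of bounded projections $\{Q_n\}_{n\in\mathbb{Z}}\subset\mathcal{L}(X)$ such that: (i) $Q_nS_{n,m}=S_{n,m}Q_m$ for $n\ge m$; (ii) for $n\ge m$, $S_{n,m}$ restricted to $R(Q_m)$ is an isomorphism onto $R(Q_n)$, and $S_{m,n}$ denotes its inverse; (iii) there are a function $K:\mathbb{Z}\to[1,\infty)$ (the bound) with $K(n)\le De^{\nu|n|}$ for some $D\ge1$, $\nu>0$, and $\alpha>0$ (the exponent) with $\|S_{n,m}(Id_X-Q_m)\|\le K(m)e^{-\alpha(n-m)}$ for $n\ge m$ and $\|S_{n,m}Q_m\|\le K(m)e^{\alpha(n-m)}$ for $n\le m$. *)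

(* Defs.v *)
From HB Require Import structures.
From mathcomp Require Import all_boot all_order all_algebra.
From mathcomp Require Import all_classical all_reals all_analysis.
Set Implicit Arguments. Unset Strict Implicit. Unset Printing Implicit Defensive.
Import Order.TTheory GRing.Theory Num.Theory.
Import numFieldNormedType.Exports.
Local Open Scope ring_scope.

Section Defs.
Context {R : realType} {X : completeNormedModType R}.

Definition opnorm_le (A : X -> X) (c : R) : Prop :=
  forall x : X, `|A x| <= c * `|x|.

Definition bounded_linear (A : {linear X -> X}) : Prop :=
  exists c : R, opnorm_le A c.

Fixpoint evol_from (S : int -> X -> X) (m : int) (k : nat) (x : X) : X :=
  match k with
  | 0%N => x
  | k'.+1 => S (m + k'%:Z) (evol_from S m k' x)
  end.

(* S_{n,m} = S_{n-1} ... S_m  for n >= m (S_{n,n} = Id). Only meaningful for n >= m. *)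
Definition evol (S : int -> X -> X) (n m : int) : X -> X :=
  evol_from S m `|n - m|%N.

(* Nonuniform exponential dichotomy of the process with one-step operators S,
   projections Q, bound K and exponent alpha (the growth condition
   K n <= D e^{nu |n|} is stated separately, see [bound_growth]).
   Sb n m (n <= m) is the backward operator S_{n,m} : R(Q_m) -> R(Q_n),
   the inverse of S_{m,n} restricted to R(Q_n). *)
Definition nonuniform_ED (S : int -> X -> X) (Q : int -> {linear X -> X})
    (K : int -> R) (alpha : R) : Prop :=
  [/\ forall n, bounded_linear (Q n) /\ (forall x, Q n (Q n x) = Q n x),
      forall n, 1 <= K n,
      0 < alpha,
      (forall n m, (m <= n)%R -> forall x, Q n (evol S n m x) = evol S n m (Q m x)) &
      exists Sb : int -> int -> X -> X,
      [/\
          (forall n m, (m <= n)%R -> forall x, Q m x = x ->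
               Sb m n (evol S n m x) = x),
          (forall n m, (m <= n)%R -> forall y, Q n y = y ->
               Q m (Sb m n y) = Sb m n y /\ evol S n m (Sb m n y) = y),
          (forall n m, (m <= n)%R ->
               opnorm_le (fun x => evol S n m (x - Q m x))
                         (K m * expR (- alpha * (n - m)%:~R))) &
          (forall n m, (n <= m)%R ->
               opnorm_le (fun x => Sb n m (Q m x))
                         (K m * expR (alpha * (n - m)%:~R)))]].

Definition bound_growth (K : int -> R) (D nu : R) : Prop :=
  1 <= D /\ 0 < nu /\ forall n : int, K n <= D * expR (nu * `|n|%:~R).

End Defs.

(* Main.v *)
Require Import Defs.
From HB Require Import structures.
From mathcomp Require Import all_boot all_order all_algebra.
From mathcomp Require Import all_classical all_reals all_analysis.
From mathcomp Require Import ring lra zify.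
Import Order.TTheory GRing.Theory Num.Theory.
Import numFieldNormedType.Exports.
Local Open Scope ring_scope.



Lemma geo_small (R: realType) (r M d : R) : 0 <= r -> r < 1 -> 0 < d ->
  exists N : nat, M * r ^+ N < d.
Proof.
move=> r0 r1 d0.
have [M0|M0] := leP M 0.
  by exists 0%N; rewrite expr0 mulr1; apply: le_lt_trans M0 d0.
have : `|r| < 1 by rewrite ger0_norm.
move/cvg_expr/cvgr_lt => /(_ (d / M)).
rewrite divr_gt0 // => /(_ isT) [N _ HN].
exists N; have := HN N (leqnn N) => /=.
by rewrite -(ltr_pM2l M0) mulrCA divff ?mulr1 // gt_eqF.
Qed.

Section S1.
Context {R : realType} {X : completeNormedModType R}.

Lemma evol_fromS (S : int -> X -> X) m k x :
  evol_from S m k.+1 x = evol_from S (m+1) k (S m x).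
Proof.
elim: k => [|k IH]; first by rewrite /= addr0.
transitivity (S (m + k.+1%:Z) (evol_from S m k.+1 x)); first by [].
rewrite IH /= -addrA; congr (S (m + _) _); by rewrite addrC -intS.
Qed.

Lemma evol_fromB (S : int -> {linear X -> X}) m k x y :
  evol_from (fun n => S n : X -> X) m k (x - y) =
  evol_from (fun n => S n : X -> X) m k x - evol_from (fun n => S n : X -> X) m k y.
Proof. by elim: k => [|k IH] //=; rewrite IH raddfB. Qed.

Lemma evolE (S : int -> X -> X) m (k : nat) : evol S (m + k%:Z) m = evol_from S m k.
Proof. by rewrite /evol (addrC m) addrK absz_nat. Qed.

End S1.


Section S2.
Context {R : realType} {X : completeNormedModType R}.

Lemma le_addn (m : int) (k : nat) : m <= m + k%:Z.
Proof. by rewrite lerDl. Qed.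

Lemma ED_nat (S : int -> {linear X -> X}) Q (K : int -> R) a :
  nonuniform_ED (fun n => S n : X -> X) Q K a ->
  let E := evol_from (fun n => S n : X -> X) in
 [/\ forall n x, Q n (Q n x) = Q n x, forall n, 1 <= K n, 0 < a,
  forall m k x, Q (m + k%:Z) (E m k x) = E m k (Q m x) &
  exists Sb : int -> int -> X -> X,
  [/\ forall m k x, Q m x = x -> Sb m (m+k%:Z) (E m k x) = x,
   forall m k y, Q (m+k%:Z) y = y -> Q m (Sb m (m+k%:Z) y) = Sb m (m+k%:Z) y
        /\ E m k (Sb m (m+k%:Z) y) = y,
   forall m k x, `|E m k (x - Q m x)| <= K m * expR (- a * k%:R) * `|x| &
   forall m k x, `|Sb m (m+k%:Z) (Q (m+k%:Z) x)| <= K (m+k%:Z) * expR (- a * k%:R) * `|x| ]].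
Proof.
move=> [HQ HK Ha Hi [Sb [Hiia Hiib Hiiia Hiiib]]] E.
split => //.
- by move=> n x; case: (HQ n).
- by move=> m k x; have := Hi (m + k%:Z) m (le_addn m k) x; rewrite evolE.
exists Sb; split.
- by move=> m k x Hx; have := Hiia (m + k%:Z) m (le_addn m k) x Hx; rewrite evolE.
- by move=> m k y Hy; have := Hiib (m + k%:Z) m (le_addn m k) y Hy; rewrite evolE.
- move=> m k x; have := Hiiia (m + k%:Z) m (le_addn m k) x; rewrite evolE.
  by rewrite (addrC m) addrK.
- move=> m k x; have := Hiiib m (m + k%:Z) (le_addn m k) x.
  by rewrite opprD addrA subrr add0r mulrNz mulrN mulNr.
Qed.
End S2.


Lemma addS_int (m : int) (k : nat) : m + k.+1%:Z = m + k%:Z + 1.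
Proof. by rewrite -addrA (addrC (Posz k)) -intS. Qed.

Section PartA.
Context {R : realType} {X : completeNormedModType R}.
Context (T S QT QS : int -> {linear X -> X}) (K : int -> R) (aT aS eps : R)
  (Tb : int -> int -> X -> X).
Local Notation ET := (evol_from (fun n => T n : X -> X)).
Local Notation ES := (evol_from (fun n => S n : X -> X)).
Context (HQT : forall n x, QT n (QT n x) = QT n x)
  (HK : forall n, 0 < K n)
  (HiT : forall m k x, QT (m + k%:Z) (ET m k x) = ET m k (QT m x))
  (HaT : forall m k x, QT m x = x -> Tb m (m+k%:Z) (ET m k x) = x)
  (HbT : forall m k y, QT (m+k%:Z) y = y -> QT m (Tb m (m+k%:Z) y) = Tb m (m+k%:Z) y
        /\ ET m k (Tb m (m+k%:Z) y) = y)
  (HdT : forall m k x, `|Tb m (m+k%:Z) (QT (m+k%:Z) x)| <= K (m+k%:Z) * expR (- aT * k%:R) * `|x|)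
  (HcS : forall m k x, `|ES m k (x - QS m x)| <= K m * expR (- aS * k%:R) * `|x|)
  (Heps0 : 0 <= eps)
  (Heps : forall n x, `|K (n+1) *: (T n x - S n x)| <= eps * `|x|).

Lemma comm1 m k x : QT (m + k.+1%:Z) (T (m + k%:Z) x) = T (m+k%:Z) (QT (m + k%:Z) x).
Proof.
have := HiT (m + k%:Z) 1 x; by rewrite /= addr0 -addS_int.
Qed.

Lemma fwd_step n k u : QT (n + k%:Z) u = u ->
  Tb n (n + k.+1%:Z) (T (n + k%:Z) u) = Tb n (n + k%:Z) u.
Proof.
move=> Hu; have [Hv1 Hv2] := HbT n k u Hu.
set v := Tb n (n + k%:Z) u in Hv1 Hv2 *.
by rewrite -[in LHS]Hv2; apply: (HaT n k.+1 v Hv1).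
Qed.

Lemma fwd_lin n k a b : QT (n + k%:Z) a = a -> QT (n + k%:Z) b = b ->
  Tb n (n + k%:Z) (a - b) = Tb n (n + k%:Z) a - Tb n (n + k%:Z) b.
Proof.
move=> Ha Hb; have [Ha1 Ha2] := HbT n k a Ha; have [Hb1 Hb2] := HbT n k b Hb.
rewrite -[in LHS]Ha2 -[in LHS]Hb2 -evol_fromB; apply: HaT.
by rewrite raddfB; congr (_ - _); [exact: Ha1 | exact: Hb1].
Qed.

Lemma partA n x N :
  `|QT n (x - QS n x)| <= \sum_(k < N) (eps * K n * `|x| * expR (- aT) * expR (- (aS + aT)) ^+ k)
     + K (n + N%:Z) * expR (- aT * N%:R) * (K n * expR (- aS * N%:R) * `|x|).
Proof.
set y := x - QS n x.
pose yk k := ES n k y.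
pose zk (k : nat) := Tb n (n + k%:Z) (QT (n + k%:Z) (yk k)).
pose dk (k : nat) := Tb n (n + k.+1%:Z) (QT (n + k.+1%:Z) (T (n + k%:Z) (yk k) - S (n+k%:Z) (yk k))).
have step k : zk k = dk k + zk k.+1.
  rewrite /zk /dk -fwd_step ?HQT // -comm1 raddfB fwd_lin ?HQT //.
  by rewrite subrK.
have tele M : QT n y = \sum_(k < M) dk k + zk M.
  elim: M => [|M IH]; first by rewrite big_ord0 add0r /zk /yk /=; have := HaT n 0 (QT n y) (HQT n y); rewrite /= !addr0 => ->.
  by rewrite big_ord_recr /= -addrA -step.
have ykb k : `|yk k| <= K n * expR (- aS * k%:R) * `|x| by apply: HcS.
have dkb k : `|dk k| <= eps * K n * `|x| * expR (- aT) * expR (- (aS + aT)) ^+ k.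
  set v := T (n + k%:Z) (yk k) - S (n+k%:Z) (yk k).
  have h1 := HdT n k.+1 v.
  have h2 : K (n + k.+1%:Z) * `|v| <= eps * `|yk k|.
    have := Heps (n + k%:Z) (yk k).
    by rewrite normrZ gtr0_norm ?HK // -addS_int.
  apply: (le_trans h1).
  have e0 := expR_ge0 (- aT * k.+1%:R).
  apply: (@le_trans _ _ (expR (- aT * k.+1%:R) * (eps * (K n * expR (- aS * k%:R) * `|x|)))).
    rewrite mulrAC [X in X <= _]mulrC; apply: ler_wpM2l => //.
    apply: (le_trans h2); apply: ler_wpM2l; last exact: ykb.
    exact: Heps0.
  have E : expR (- aT * k.+1%:R) * expR (- aS * k%:R) = expR (- aT) * expR (- (aS + aT)) ^+ k.
    by rewrite -expRM_natr -!expRD mulrS; congr expR; ring.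
  rewrite le_eqVlt; apply/orP; left; apply/eqP; rewrite -[RHS]mulrA -E; ring.
rewrite (tele N); apply: le_trans (ler_normD _ _) _; apply: lerD.
  apply: le_trans (ler_norm_sum _ _ _) _; apply: ler_sum => k _; exact: dkb.
apply: le_trans (HdT n N (yk N)) _; apply: ler_wpM2l; last exact: ykb.
by rewrite mulr_ge0 ?expR_ge0 // ltW.
Qed.

End PartA.


Lemma swapB (V : zmodType) (a b c d : V) : (a - c) - (b - d) = (a - b) - (c - d).
Proof. by rewrite !opprB addrACA (addrC (-c)) addrACA (addrC d). Qed.

Lemma addS_int' (m : int) (k : nat) : m + 1 + k%:Z = m + k.+1%:Z.
Proof. by rewrite -addrA -intS. Qed.

Lemma subS_int (n : int) (k : nat) : n - k.+1%:Z + 1 = n - k%:Z.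
Proof. rewrite intS; ring. Qed.

Lemma linB {R : realType} {X : completeNormedModType R} (L : {linear X -> X}) (a b : X) :
  L (a - b) = L a - L b.
Proof. exact: raddfB. Qed.

Section PartB.
Context {R : realType} {X : completeNormedModType R}.
Context (T S QT QS : int -> {linear X -> X}) (K : int -> R) (aT aS eps : R)
  (Sb : int -> int -> X -> X).
Local Notation ET := (evol_from (fun n => T n : X -> X)).
Local Notation ES := (evol_from (fun n => S n : X -> X)).
Context (HQT : forall n x, QT n (QT n x) = QT n x)
  (HQS : forall n x, QS n (QS n x) = QS n x)
  (HK : forall n, 0 < K n)
  (HiT : forall m k x, QT (m + k%:Z) (ET m k x) = ET m k (QT m x))
  (HiS : forall m k x, QS (m + k%:Z) (ES m k x) = ES m k (QS m x))
  (HaS : forall m k x, QS m x = x -> Sb m (m+k%:Z) (ES m k x) = x)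
  (HbS : forall m k y, QS (m+k%:Z) y = y -> QS m (Sb m (m+k%:Z) y) = Sb m (m+k%:Z) y
        /\ ES m k (Sb m (m+k%:Z) y) = y)
  (HdS : forall m k x, `|Sb m (m+k%:Z) (QS (m+k%:Z) x)| <= K (m+k%:Z) * expR (- aS * k%:R) * `|x|)
  (HcT : forall m k x, `|ET m k (x - QT m x)| <= K m * expR (- aT * k%:R) * `|x|)
  (Heps0 : 0 <= eps)
  (Heps : forall n x, `|K (n+1) *: (T n x - S n x)| <= eps * `|x|).

Lemma commT1 m x : QT (m + 1) (T m x) = T m (QT m x).
Proof. by have := HiT m 1 x; rewrite /= addr0. Qed.

Lemma commS1 m x : QS (m + 1) (S m x) = S m (QS m x).
Proof. by have := HiS m 1 x; rewrite /= addr0. Qed.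

Lemma bwd_chain m k y : QS (m + k.+1%:Z) y = y ->
  S m (Sb m (m + k.+1%:Z) y) = Sb (m+1) (m + k.+1%:Z) y.
Proof.
move=> Hy; have [Hw1 Hw2] := HbS m k.+1 y Hy.
set w := Sb m (m + k.+1%:Z) y in Hw1 Hw2 *.
have Ha : QS (m+1) (S m w) = S m w by rewrite commS1 Hw1.
have := HaS (m+1) k (S m w) Ha.
by rewrite -evol_fromS Hw2 addS_int' => ->.
Qed.

Lemma partB n x N :
  `|QS n x - QT n (QS n x)| <= \sum_(k < N) (eps * K n * `|x| * expR (- aS) * expR (- (aS + aT)) ^+ k)
     + K (n - N%:Z) * expR (- aT * N%:R) * (K n * expR (- aS * N%:R) * `|x|).
Proof.
pose uk (k : nat) := Sb (n - k%:Z) n (QS n x).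
pose fk (k : nat) := ET (n - k%:Z) k (uk k - QT (n - k%:Z) (uk k)).
have tele M : QS n x - QT n (QS n x) = \sum_(k < M) (fk k - fk k.+1) + fk M.
  elim: M => [|M IH].
    rewrite big_ord0 add0r /fk /uk /= subr0.
    by have := HaS n 0 (QS n x) (HQS n x); rewrite /= !addr0 => ->.
  by rewrite big_ord_recr /= -addrA subrK.
have ukb k : `|uk k| <= K n * expR (- aS * k%:R) * `|x|.
  by have := HdS (n - k%:Z) k x; rewrite subrK.
have dkE k : fk k - fk k.+1 = ET (n - k%:Z) k
    ((S (n - k.+1%:Z) (uk k.+1) - T (n - k.+1%:Z) (uk k.+1))
     - QT (n - k%:Z) (S (n - k.+1%:Z) (uk k.+1) - T (n - k.+1%:Z) (uk k.+1))).
  rewrite /fk evol_fromS linB -commT1 subS_int.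
  have := bwd_chain (n - k.+1%:Z) k (QS n x); rewrite subrK subS_int HQS => /(_ erefl) Hc.
  rewrite -/(uk k) -/(uk k.+1) in Hc.
  by rewrite -Hc -evol_fromB (linB (QT (n - k%:Z))) swapB.
rewrite (tele N); apply: le_trans (ler_normD _ _) _; apply: lerD.
  apply: le_trans (ler_norm_sum _ _ _) _; apply: ler_sum => k _; rewrite dkE.
  set v := S (n - k.+1%:Z) (uk k.+1) - T (n - k.+1%:Z) (uk k.+1).
  have h1 := HcT (n - k%:Z) k v.
  have h2 : K (n - k%:Z) * `|v| <= eps * `|uk k.+1|.
    have := Heps (n - k.+1%:Z) (uk k.+1).
    by rewrite normrZ gtr0_norm ?HK // subS_int distrC.
  apply: (le_trans h1).
  have e0 := expR_ge0 (- aT * k%:R).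
  apply: (@le_trans _ _ (expR (- aT * k%:R) * (eps * (K n * expR (- aS * k.+1%:R) * `|x|)))).
    rewrite mulrAC [X in X <= _]mulrC; apply: ler_wpM2l => //.
    apply: (le_trans h2); apply: ler_wpM2l; last exact: ukb.
    exact: Heps0.
  have E : expR (- aT * k%:R) * expR (- aS * k.+1%:R) = expR (- aS) * expR (- (aS + aT)) ^+ k.
    by rewrite -expRM_natr -!expRD mulrS; congr expR; ring.
  rewrite le_eqVlt; apply/orP; left; apply/eqP; rewrite -[RHS]mulrA -E; ring.
apply: le_trans (HcT (n - N%:Z) N (uk N)) _; apply: ler_wpM2l; last exact: ukb.
by rewrite mulr_ge0 ?expR_ge0 // ltW.
Qed.
End PartB.

Lemma geo_sum_le (R : realType) (q : R) (N : nat) : 0 <= q -> q < 1 ->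
  \sum_(k < N) q ^+ k <= (1 - q)^-1.
Proof.
move=> q0 q1.
have E : (1 - q) * \sum_(k < N) q ^+ k = 1 - q ^+ N.
  elim: N => [|N IH]; first by rewrite big_ord0 mulr0 expr0 subrr.
  by rewrite big_ord_recr /= mulrDr IH exprS; ring.
have pq : 0 < 1 - q by rewrite subr_gt0.
rewrite -[X in X <= _](mulKf (lt0r_neq0 pq)) E.
rewrite -[X in _ <= X]mulr1; apply: ler_wpM2l; first by rewrite invr_ge0 ltW.
by rewrite lerBlDr lerDl exprn_ge0.
Qed.

Lemma normD_le (R : realType) (n : int) (N : nat) :
  (`|n + N%:Z|%:~R : R) <= `|n|%:~R + N%:R.
Proof.
have h : `|n + N%:Z| <= `|n| + N%:Z by lia.
by rewrite -[N%:R]/((N%:Z)%:~R) -intrD ler_int.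
Qed.

Lemma normB_le (R : realType) (n : int) (N : nat) :
  (`|n - N%:Z|%:~R : R) <= `|n|%:~R + N%:R.
Proof.
have h : `|n - N%:Z| <= `|n| + N%:Z by lia.
by rewrite -[N%:R]/((N%:Z)%:~R) -intrD ler_int.
Qed.

Theorem mainTheorem2 (R : realType) (X : completeNormedModType R)
  (T S : int -> {linear X -> X}) (QT QS : int -> {linear X -> X})
  (K : int -> R) (D nu alphaT alphaS eps : R) :
  (forall n, bounded_linear (T n)) ->
  (forall n, bounded_linear (S n)) ->
  bound_growth K D nu ->
  nonuniform_ED (fun n => T n : X -> X) QT K alphaT ->
  nonuniform_ED (fun n => S n : X -> X) QS K alphaS ->
  nu < Num.min alphaT alphaS ->
  (forall n : int, opnorm_le (fun x => K (n + 1) *: (T n x - S n x)) eps) ->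
  forall n : int,
    opnorm_le (fun x => (K n)^-1 *: (QT n x - QS n x))
      ((expR (- alphaS) + expR (- alphaT)) / (1 - expR (- (alphaS + alphaT))) * eps).
Proof.
move=> _ _ [D1 [nu0 HKg]] EDT EDS Hnu Heps' n x /=.
have Heps : forall m y, `|K (m+1) *: (T m y - S m y)| <= eps * `|y| by move=> m y; exact: Heps' m y.
have := @ED_nat _ _ T QT K alphaT EDT => /= -[HQT HKT aT0 HiT [Tb [HaT HbT HcT HdT]]].
have := @ED_nat _ _ S QS K alphaS EDS => /= -[HQS _ aS0 HiS [Sb [HaS HbS HcS HdS]]].
have HK m : 0 < K m by apply: lt_le_trans (HKT m); exact: ltr01.
have [eps0|eps0] := ltP eps 0.
  have x0 : x = 0.
    apply/normr0_eq0/eqP; rewrite eq_le normr_ge0 andbT.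
    have := le_trans (normr_ge0 _) (Heps n x).
    have hx := normr_ge0 x; move=> h; nra.
  by rewrite x0 !raddf0 addr0 scaler0 !normr0 mulr0.
set A := QT n (x - QS n x).
set B := QS n x - QT n (QS n x).
have AB : QT n x - QS n x = A - B.
  by rewrite /A /B linB opprB addrA subrK.
set q := expR (- (alphaS + alphaT)).
have q0 : 0 <= q by apply: expR_ge0.
have q1 : q < 1 by rewrite expR_lt1 oppr_lt0 addr_gt0.
move: Hnu; rewrite lt_min => /andP[nuT nuS].
set r := expR (nu - alphaT - alphaS).
have r0 : 0 <= r by apply: expR_ge0.
have r1 : r < 1 by rewrite expR_lt1; lra.
set W := D * expR (nu * `|n|%:~R) * K n * `|x|.
set C := eps * K n * `|x| * (expR (- alphaT) + expR (- alphaS)) / (1 - q).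
have Kb (N : nat) (m : int) : (`|m|%:~R : R) <= `|n|%:~R + N%:R ->
    K m * expR (- alphaT * N%:R) * (K n * expR (- alphaS * N%:R) * `|x|) <= W * r ^+ N.
  move=> hm.
  have hK : K m <= D * expR (nu * `|n|%:~R) * expR (nu * N%:R).
    apply: le_trans (HKg m) _; rewrite -mulrA -expRD; apply: ler_wpM2l; first exact: le_trans ler01 D1.
    by rewrite ler_expR; apply: le_trans (ler_wpM2l (ltW nu0) hm) _; rewrite mulrDr.
  have Er : expR (nu * N%:R) * expR (- alphaT * N%:R) * expR (- alphaS * N%:R) = r ^+ N.
    by rewrite -expRM_natr -!expRD; congr expR; ring.
  apply: le_trans (_ : D * expR (nu * `|n|%:~R) * expR (nu * N%:R) *
     (expR (- alphaT * N%:R) * (K n * expR (- alphaS * N%:R) * `|x|)) <= _).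
    rewrite -mulrA; apply: ler_wpM2r => //.
    by rewrite mulr_ge0 ?expR_ge0 // mulr_ge0 ?normr_ge0 // mulr_ge0 ?expR_ge0 // ltW.
  rewrite le_eqVlt; apply/orP; left; apply/eqP; rewrite /W -Er; ring.
have key (N : nat) : `|A - B| <= C + (W + W) * r ^+ N.
  have hA := @partA _ _ T S QT QS K alphaT alphaS eps Tb HQT HK HiT HaT HbT HdT HcS eps0 Heps n x N.
  have hB := @partB _ _ T S QT QS K alphaT alphaS eps Sb HQS HK HiT HiS HaS HbS HdS HcT eps0 Heps n x N.
  have hmA : (`|n + N%:Z|%:~R : R) <= `|n|%:~R + N%:R.
    exact: normD_le.
  have hmB : (`|n - N%:Z|%:~R : R) <= `|n|%:~R + N%:R.
    exact: normB_le.
  have kA := Kb N _ hmA.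
  have kB := Kb N _ hmB.
  have sA : \sum_(k < N) (eps * K n * `|x| * expR (- alphaT) * expR (- (alphaS + alphaT)) ^+ k)
      <= eps * K n * `|x| * expR (- alphaT) * (1 - q)^-1.
    rewrite -big_distrr /=; apply: ler_wpM2l; last exact: geo_sum_le.
    by rewrite !mulr_ge0 ?expR_ge0 ?normr_ge0 // ltW.
  have sB : \sum_(k < N) (eps * K n * `|x| * expR (- alphaS) * expR (- (alphaS + alphaT)) ^+ k)
      <= eps * K n * `|x| * expR (- alphaS) * (1 - q)^-1.
    rewrite -big_distrr /=; apply: ler_wpM2l; last exact: geo_sum_le.
    by rewrite !mulr_ge0 ?expR_ge0 ?normr_ge0 // ltW.
  have EC : C = eps * K n * `|x| * expR (- alphaT) * (1 - q)^-1 +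
                eps * K n * `|x| * expR (- alphaS) * (1 - q)^-1 by rewrite /C; ring.
  apply: le_trans (ler_normB A B) _.
  apply: le_trans (lerD hA hB) _.
  apply: le_trans (lerD (lerD sA kA) (lerD sB kB)) _.
  rewrite EC le_eqVlt; apply/orP; left; apply/eqP; ring.
have AC : `|A - B| <= C.
  rewrite leNgt; apply/negP => hlt.
  have [N HN] := @geo_small _ r (W + W) (`|A - B| - C) r0 r1 ltac:(by rewrite subr_gt0).
  move: (key N) HN; generalize (`|A - B|) C ((W + W) * r ^+ N) => a c w; lra.
rewrite AB normrZ ger0_norm; last by rewrite invr_ge0 ltW.
apply: le_trans (ler_wpM2l _ AC) _; first by rewrite invr_ge0 ltW.
have Kn0 : K n != 0 by rewrite gt_eqF.
have q10 : 1 - q != 0 by rewrite subr_eq0 eq_sym lt_eqF.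
rewrite le_eqVlt; apply/orP; left; apply/eqP.
rewrite /C -/q; field.
by rewrite Kn0 q10.
Qed.
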